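(* Let $(\mathbf{A},E,D)$ be a scheme on $P$ compute nodes with gradient dimension $d\ge1$. If $(\mathbf{A},E,D)$ tolerates $s$ adversarial nodes, then $s\le \frac{P-1}{2}$.
   Context: Fix integers $P\ge 1$ (number of compute nodes) and $d\ge 1$. A scheme is a triple $(\mathbf{A},E,D)$ where $\mathbf{A}\in\{0,1\}^{P\times P}$ is an allocation matrix ($\mathbf{A}_{j,k}=1$ means node $j$ is assigned gradient $k$), $E=(E_1,\dots,E_P)$ with each $E_j:\mathbb{R}^{d\times P}\to\mathbb{R}^d$ an arbitrary function (encoder of node $j$), and $D:\mathbb{R}^{d\times P}\to\mathbb{R}^d$ an arbitrary function (decoder). For $\mathbf{G}=[\mathbf{g}_1,\dots,\mathbf{g}_P]\in\mathbb{R}^{d\times P}$, let $\mathbf{Y}_j=(\mathbf{1}_d\mathbf{A}_{j,\cdot})\odot\mathbf{G}$ (the $d\times P$ matrix whose $k$-th column is $\mathbf{g}_k$ if $\mathbf{A}_{j,k}=1$ and $\mathbf{0}_d$ otherwise), $\mathbf{z}_j=E_j(\mathbf{Y}_j)$, and $\mathbf{Z}^{\mathbf{A},E,\mathbf{G}}=[\mathbf{z}_1,\dots,\mathbf{z}_P]$. The scheme tolerates $s$ adversarial nodes if for every $\mathbf{G}\in\mathbb{R}^{d\times P}$ and every $\mathbf{N}\in\mathbb{R}^{d\times P}$ with at most $s$ nonzero columns, $D(\mathbf{Z}^{\mathbf{A},E,\mathbf{G}}+\mathbf{N})=\mathbf{G}\mathbf{1}_P$. *)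

(* Defs.v *)
From mathcomp Require Import all_boot.
From Stdlib Require Import Reals.
Set Implicit Arguments. Unset Strict Implicit. Unset Printing Implicit Defensive.

(* A d x P real matrix, represented column-wise: M k is the k-th column in R^d. *)
Definition vec (d : nat) := 'I_d -> R.
Definition mat (d P : nat) := 'I_P -> vec d.

Definition zero_vec (d : nat) : vec d := fun _ => 0%R.

(* Allocation matrix A in {0,1}^{P x P}: A j k = true means node j gets gradient k. *)
Definition alloc (P : nat) := 'I_P -> 'I_P -> bool.

Definition encoders (d P : nat) := 'I_P -> (mat d P -> vec d).
Definition decoder (d P : nat) := mat d P -> vec d.

Definition Ymat d P (A : alloc P) (G : mat d P) (j : 'I_P) : mat d P :=
  fun k => if A j k then G k else @zero_vec d.

Definition Zmat d P (A : alloc P) (E : encoders d P) (G : mat d P) : mat d P :=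
  fun j => E j (Ymat A G j).

Definition mat_add d P (M N : mat d P) : mat d P := fun k i => (M k i + N k i)%R.

Definition col_sum d P (G : mat d P) : vec d :=
  fun i => \big[Rplus/0%R]_(k < P) G k i.

Definition at_most_nonzero_cols d P (N : mat d P) (s : nat) : Prop :=
  exists S : {set 'I_P}, #|S| <= s /\ (forall k, k \notin S -> forall i, N k i = 0%R).

Definition tolerates d P (A : alloc P) (E : encoders d P) (D : decoder d P) (s : nat) : Prop :=
  forall (G N : mat d P), at_most_nonzero_cols N s ->
    D (mat_add (Zmat A E G) N) = col_sum G.

(* Main.v *)
Require Import Defs.
From HB Require Import structures.
From mathcomp Require Import all_boot.
From Stdlib Require Import Reals Lra Lia FunctionalExtensionality.
From mathcomp Require Import zify.
HB.instance Definition _ := Monoid.isComLaw.Build R 0%R Rplus (fun a b c => esym (Rplus_assoc a b c)) Rplus_comm Rplus_0_l.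
Lemma sum_ones (P : nat) : (0 < P)%N -> (\big[Rplus/0%R]_(k < P) 1%R > 0)%R.
Proof.
move=> HP; rewrite -(prednK HP); elim: P.-1 => [|n IH].
  by rewrite big_ord_recr big_ord0 /=; lra.
rewrite big_ord_recr /=; have h : forall x, (x > 0 -> x + 1 > 0)%R by move=> x; lra.
apply: h; exact: IH.
Qed.

Theorem mainTheorem2 (P d : nat) (hP : 1 <= P) (hd : 1 <= d)
  (A : alloc P) (E : encoders d P) (D : decoder d P) (s : nat) :
  tolerates A E D s -> (2 * s <= P - 1)%N.
Proof.
move=> Ht; case: (leqP (2 * s) (P - 1)) => // Hlt; exfalso.
case: s Ht Hlt => [|s'] Ht Hlt; first by rewrite muln0 in Hlt.
set s := s'.+1 in Ht Hlt.
have HPs : (P - s <= s)%N.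
  by move: Hlt hP; rewrite /s; lia.
set S1 := [set k : 'I_P | (k < s)%N].
set S2 := [set k : 'I_P | (s <= k)%N].
have c1 : #|S1| <= s.
  have := @leq_card_in _ _ (fun k : 'I_P => (inord k : 'I_s)) (mem S1).
  rewrite card_ord; apply => x y; rewrite !inE => hx hy /(congr1 val).
  by rewrite /= !inordK // => /val_inj.
have c2 : #|S2| <= s.
  have := @leq_card_in _ _ (fun k : 'I_P => (inord (k - s) : 'I_s)) (mem S2).
  rewrite card_ord; apply => x y; rewrite !inE => hx hy /(congr1 val).
  have lx := ltn_ord x; have ly := ltn_ord y.
  rewrite /= !inordK; last 2 first.
  - move: HPs ly hy; lia.
  - move: HPs lx hx; lia.
  move=> h; apply: ord_inj; move: h hx hy; lia.
set G0 : mat d P := fun _ _ => 0%R.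
set G1 : mat d P := fun _ _ => 1%R.
set Z0 := Zmat A E G0. set Z1 := Zmat A E G1.
set N1 : mat d P := fun k i => if (k < s)%N then (Z1 k i - Z0 k i)%R else 0%R.
set N2 : mat d P := fun k i => if (k < s)%N then 0%R else (Z0 k i - Z1 k i)%R.
have e : mat_add Z0 N1 = mat_add Z1 N2.
  apply: functional_extensionality => k; apply: functional_extensionality => i.
  rewrite /mat_add /N1 /N2; case: (k < s)%N; lra.
have h0 : D (mat_add Z0 N1) = col_sum G0.
  apply: Ht; exists S1; split => // k; rewrite inE /N1 => /negbTE -> //.
have h1 : D (mat_add Z1 N2) = col_sum G1.
  apply: Ht; exists S2; split => // k; rewrite inE -ltnNge => hk i; by rewrite /N2 ifT.
have := congr1 (fun v => v (Ordinal hd)) (congr1 D e).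
rewrite h0 h1 /col_sum /G0 /G1 /= big1 // => H.
have g : forall x, (0 = x)%R -> (x > 0)%R -> False by move=> x; lra.
exact: g H (@sum_ones P hP).
Qed.
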